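(* Let $\epsilon\in(0,1)$, $\alpha\ge1$, and let $W$ be a mass vector satisfying $(1-\epsilon)H(\theta,\lambda)\le\tilde H(\theta,\lambda)\le(1+\epsilon)H(\theta,\lambda)$ for all $\theta\in\Theta$ and $\lambda\in[\kappa(\theta),\tau(\theta)]$, with $\tilde{\mathbb P}_n=\sum_iw_i\delta_{\xi_i}$. If $\theta_0\in\Theta$ satisfies $R^{\tilde{\mathbb P}_n}_{\sigma,p}(\theta_0)\le\alpha\inf_{\theta\in\Theta}R^{\tilde{\mathbb P}_n}_{\sigma,p}(\theta)$, then $$R^{\mathbb P_n}_{\sigma,p}(\theta_0)\le\alpha\cdot\frac{1+\epsilon}{1-\epsilon}\inf_{\theta\in\Theta}R^{\mathbb P_n}_{\sigma,p}(\theta).$$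
   Context: Setting: $\Xi=\mathbb X\times\mathbb Y$ with $\mathbb X\subseteq\mathbb R^m$, $\mathbb Y\subseteq\mathbb R$, metric $\mathtt d((x,y),(x',y'))=\|x-x'\|+\frac{\gamma}{2}|y-y'|$ ($\|\cdot\|$ a norm on $\mathbb R^m$, $\gamma>0$), $(\Xi,\mathtt d)$ complete. Fix $p\ge1$, $\sigma>0$, data $\xi_1,\dots,\xi_n\in\Xi$ with empirical distribution $\mathbb P_n=\frac1n\sum_i\delta_{\xi_i}$. Loss $\ell:\mathbb R^d\times\Xi\to[0,\infty)$, feasible set $\Theta\subseteq\mathbb R^d$. Assumption: $\ell(\theta,\cdot)$ continuous for each $\theta\in\Theta$, and there are a positive continuous $\mathtt C(\theta)$ and $\xi_0\in\Xi$ with $\ell(\theta,\xi)\le\mathtt C(\theta)(1+\mathtt d^p(\xi,\xi_0))$. The $p$-Wasserstein distance is $W_p(\mathbb P,\mathbb P')=(\inf_{\pi\in\Pi(\mathbb P,\mathbb P')}\int\mathtt d^p(\xi,\xi')\,\pi(d\xi,d\xi'))^{1/p}$; $\mathbb B_{\sigma,p}(\mathbb Q)$ is the set of Borel probability measures on $\Xi$ at $W_p$-distance at most $\sigma$ from $\mathbb Q$; the worst-case risk is $R^{\mathbb Q}_{\sigma,p}(\theta)=\sup_{\mathbb Q'\in\mathbb B_{\sigma,p}(\mathbb Q)}\mathbb E^{\mathbb Q'}[\ell(\theta,\xi)]$. Define $h(\theta,\lambda,\xi)=\sup_{\zeta\in\Xi}\{\ell(\theta,\zeta)-\lambda\mathtt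 d^p(\zeta,\xi)\}$, $h_i(\theta,\lambda)=h(\theta,\lambda,\xi_i)$, $H(\theta,\lambda)=\frac1n\sum_ih_i(\theta,\lambda)$, and for a mass vector $W=[w_1,\dots,w_n]$ ($w_i\ge0,\sum w_i=1$), $\tilde H(\theta,\lambda)=\sum_iw_ih_i(\theta,\lambda)$. Known strong duality (standing fact): for any $\mathbb Q$ with finite $p$-th moment, $R^{\mathbb Q}_{\sigma,p}(\theta)=\inf_{\lambda\ge0}\{\lambda\sigma^p+\mathbb E^{\mathbb Q}[h(\theta,\lambda,\xi)]\}$. Define $\kappa(\theta)=\limsup_{\mathtt d(\xi,\xi_0)\to\infty}\frac{\ell(\theta,\xi)-\ell(\theta,\xi_0)}{\mathtt d^p(\xi,\xi_0)}$; assume $h_i(\theta,\kappa(\theta))<\infty$. Let $\rho=\max_i\mathtt d(\xi_i,\xi_0)$ and $\tau(\theta)=\mathtt C(\theta)(2^{p-1}+\frac{1+2^{p-1}\rho^p}{\sigma^p})$. *)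

(* Defs.v *)
From HB Require Import structures.
From mathcomp Require Import all_boot all_order all_algebra.
From mathcomp Require Import all_classical all_reals all_analysis.
Set Implicit Arguments. Unset Strict Implicit. Unset Printing Implicit Defensive.
Import Order.TTheory GRing.Theory Num.Theory.
Import numFieldNormedType.Exports.
Local Open Scope classical_set_scope.
Local Open Scope ring_scope.

(* ambient space R^m x R ; Xi = X `*` Y is a subset of it *)
Definition Pt (R : realType) (m : nat) := ('rV[R]_m * R)%type.

Definition is_norm (R : realType) (m : nat) (nrm : 'rV[R]_m -> R) : Prop :=
  [/\ forall x, nrm x = 0 -> x = 0,
      forall (a : R) x, nrm (a *: x) = `|a| * nrm x &
      forall x y, nrm (x + y) <= nrm x + nrm y].

Section S.
Variables (R : realType) (m : nat) (nrm : 'rV[R]_m -> R) (gamma : R).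

Definition dist (x y : Pt R m) : R := nrm (x.1 - y.1) + gamma / 2 * `|x.2 - y.2|.

Definition dopen (A : set (Pt R m)) : Prop :=
  forall x, A x -> exists2 r : R, 0 < r & forall y, dist y x < r -> A y.

Definition XiM : Type := g_sigma_algebraType dopen.

Definition complete_on (Xi : set (Pt R m)) : Prop :=
  forall u : nat -> Pt R m, (forall k, Xi (u k)) ->
    (forall e : R, 0 < e -> exists N, forall k l, (N <= k)%N -> (N <= l)%N ->
        dist (u k) (u l) < e) ->
    exists2 x, Xi x & forall e : R, 0 < e -> exists N, forall k, (N <= k)%N ->
        dist (u k) x < e.

Variable (p : R).

Definition coupling (P Q : set XiM -> \bar R)
    (pi : probability (XiM * XiM)%type R) : Prop :=
  forall A : set XiM, measurable A ->
    pi (fst @^-1` A) = P A /\ pi (snd @^-1` A) = Q A.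

Definition Wpp (P Q : set XiM -> \bar R) : \bar R :=
  ereal_inf [set (\int[pi]_z ((dist z.1 z.2) `^ p)%:E)%E | pi in coupling P Q].

Definition Wp (P Q : set XiM -> \bar R) : \bar R := ((Wpp P Q) `^ p^-1)%E.

Variables (Xi : set (Pt R m)) (sigma : R).

Definition wball (Q : set XiM -> \bar R) (Q' : probability XiM R) : Prop :=
  Q' Xi = 1%E /\ (Wp Q Q' <= sigma%:E)%E.

Variables (dd : nat) (loss : 'rV[R]_dd -> Pt R m -> R).

Definition wc_risk (Q : set XiM -> \bar R) (theta : 'rV[R]_dd) : \bar R :=
  ereal_sup [set (\int[Q']_(x in Xi) (loss theta x)%:E)%E | Q' in wball Q].

Definition hfun (theta : 'rV[R]_dd) (lam : R) (xi : Pt R m) : \bar R :=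
  ereal_sup [set (loss theta zeta - lam * (dist zeta xi) `^ p)%:E | zeta in Xi].

(* kappa(theta) = limsup_{d(xi,xi0) -> oo, xi in Xi} (l(xi)-l(xi0))/d^p(xi,xi0) *)
Definition kappa (xi0 : Pt R m) (theta : 'rV[R]_dd) : \bar R :=
  ereal_inf [set ereal_sup
     [set ((loss theta xi - loss theta xi0) / (dist xi xi0) `^ p)%:E
        | xi in Xi `&` [set xi | r < dist xi xi0]]
   | r in [set r : R | 0 < r]].

Variables (n : nat) (xs : 'I_n -> Pt R m).

Definition wmeasure (w : 'I_n -> R) (A : set XiM) : \bar R :=
  (\sum_(i < n) (w i)%:E * @dirac _ XiM (xs i : XiM) R A)%E.

Definition empirical : set XiM -> \bar R := wmeasure (fun _ => n%:R^-1).

Definition Hfun (theta : 'rV[R]_dd) (lam : R) : \bar R :=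
  (\sum_(i < n) (n%:R^-1)%:E * hfun theta lam (xs i))%E.
Definition Htilde (w : 'I_n -> R) (theta : 'rV[R]_dd) (lam : R) : \bar R :=
  (\sum_(i < n) (w i)%:E * hfun theta lam (xs i))%E.

Definition rho (xi0 : Pt R m) : R := \big[Num.max/0]_(i < n) dist (xs i) xi0.

Definition tau (C : 'rV[R]_dd -> R) (xi0 : Pt R m) (theta : 'rV[R]_dd) : R :=
  C theta * (2 `^ (p - 1) + (1 + 2 `^ (p - 1) * (rho xi0) `^ p) / sigma `^ p).

End S.

Arguments coupling {R m} nrm gamma P Q pi.
Arguments Wpp {R m} nrm gamma p P Q.
Arguments Wp {R m} nrm gamma p P Q.
Arguments wball {R m} nrm gamma p Xi sigma Q Q'.
Arguments wc_risk {R m} nrm gamma p Xi sigma {dd} loss Q theta.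
Arguments wmeasure {R m} nrm gamma {n} xs w A.
Arguments empirical {R m} nrm gamma {n} xs A.

(* Main.v *)
Require Import Defs.
From HB Require Import structures.
From mathcomp Require Import all_boot all_order all_algebra.
From mathcomp Require Import all_classical all_reals all_analysis.
From mathcomp Require Import lra.
Import Order.TTheory GRing.Theory Num.Theory.
Import numFieldNormedType.Exports.
Local Open Scope classical_set_scope.
Local Open Scope ring_scope.

Set Implicit Arguments.
Section Aux.
Variables (R : realType) (m : nat) (nrm : 'rV[R]_m -> R) (gamma : R).
Hypothesis Hn : is_norm nrm.
Hypothesis g0 : 0 < gamma.

Lemma nrmN x : nrm (- x) = nrm x.
Proof. case: Hn => _ hs _. by rewrite -scaleN1r hs normrN normr1 mul1r. Qed.

Lemma nrm_ge0 x : 0 <= nrm x.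
Proof.
case: Hn => _ hs ht. have := ht x (- x). rewrite subrr nrmN.
have -> : nrm 0 = 0 by rewrite -(scale0r 0) hs normr0 mul0r.
lra.
Qed.

Lemma dist_ge0 x y : 0 <= dist nrm gamma x y.
Proof. by rewrite /dist addr_ge0 ?nrm_ge0 // mulr_ge0 // divr_ge0 // ltW. Qed.

Lemma dist_sym x y : dist nrm gamma x y = dist nrm gamma y x.
Proof. by rewrite /dist -opprB nrmN -(opprB y.2) normrN. Qed.

Lemma dist_xx x : dist nrm gamma x x = 0.
Proof.
rewrite /dist !subrr normr0 mulr0 addr0.
case: Hn => _ hs _. by rewrite -(scale0r 0) hs normr0 mul0r.
Qed.

Lemma dist_tri x y z : dist nrm gamma x z <= dist nrm gamma x y + dist nrm gamma y z.
Proof.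
rewrite /dist. case: Hn => _ _ ht.
have h1 := ht (x.1 - y.1) (y.1 - z.1). rewrite subrKA in h1.
have h2 := ler_normD (x.2 - y.2) (y.2 - z.2). rewrite subrKA in h2.
have hg : 0 <= gamma / 2 by rewrite divr_ge0 // ltW.
have := ler_wpM2l hg h2. rewrite mulrDr. lra.
Qed.
End Aux.

Lemma powR_conv (R : realType) (a b p : R) : 0 <= a -> 0 <= b -> 1 <= p ->
  (a + b) `^ p <= 2 `^ (p - 1) * (a `^ p + b `^ p).
Proof.
move=> a0 b0 p1.
have h : (2^-1 * (2 * a) + 2^-1 * (2 * b)) `^ p <= 2^-1 * (2 * a) `^ p + 2^-1 * (2 * b) `^ p.
  rewrite {2 4}(_ : 2^-1 = 1 - 2^-1); last by rewrite {2}(splitr 1) div1r addrK.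
  apply: (convex_powR p1 (Itv01 _ _)) => //=;
  rewrite ?inE/= ?in_itv/= ?mulr_ge0 // ?invr_ge0// invf_le1 ?ler1n //.
move: h; rewrite !mulrA mulVf// !mul1r => /le_trans; apply.
rewrite !powRM// !mulrA -powR_inv1// -powRD ?pnatr_eq0 ?implybT//.
by rewrite (addrC _ p) -mulrDr.
Qed.

Section Main.
Variables (R : realType) (m : nat) (nrm : 'rV[R]_m -> R) (gamma p : R)
  (Xi : set (Pt R m)) (dd : nat) (loss : 'rV[R]_dd -> Pt R m -> R)
  (theta : 'rV[R]_dd) (xi0 : Pt R m).
Hypothesis Hn : is_norm nrm.
Hypothesis g0 : 0 < gamma.
Hypothesis p1 : 1 <= p.
Hypothesis loss_ge0 : forall xi, 0 <= loss theta xi.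
Local Notation d := (dist nrm gamma).
Local Notation h := (hfun nrm gamma p Xi loss theta).
Local Notation kap := (kappa nrm gamma p Xi loss xi0 theta).

Let p0 : 0 < p. Proof. exact: (lt_le_trans ltr01 p1). Qed.

Lemma h_ge_loss lam xi : Xi xi -> ((loss theta xi)%:E <= h lam xi)%E.
Proof.
move=> Hxi; apply: ereal_sup_ubound; exists xi => //.
by rewrite (@dist_xx _ _ _ gamma Hn) powR0 ?mulr0 ?subr0 // gt_eqF.
Qed.

Lemma h_ge0 lam xi : Xi xi -> (0 <= h lam xi)%E.
Proof. by move=> Hxi; apply: le_trans (h_ge_loss lam Hxi); rewrite lee_fin. Qed.

Lemma h_ub (C : R) xi : 0 < C ->
  (forall z, Xi z -> loss theta z <= C * (1 + d z xi0 `^ p)) -> Xi xi ->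
  (h (C * 2 `^ (p-1)) xi <= (C * (1 + 2 `^ (p-1) * d xi xi0 `^ p))%:E)%E.
Proof.
move=> C0 HC Hxi; apply: ub_ereal_sup => _ [z Hz <-]; rewrite lee_fin.
have h1 := HC z Hz.
have h2 : d z xi0 `^ p <= 2 `^ (p-1) * (d z xi `^ p + d xi xi0 `^ p).
  have := @powR_conv R _ _ _ (@dist_ge0 _ _ _ _ Hn g0 z xi) (@dist_ge0 _ _ _ _ Hn g0 xi xi0) p1.
  apply: le_trans.
  apply: ge0_ler_powR; first exact: ltW.
  - by rewrite nnegrE (@dist_ge0 _ _ _ _ Hn g0).
  - by rewrite nnegrE addr_ge0 // (@dist_ge0 _ _ _ _ Hn g0).
  - exact: (@dist_tri _ _ _ gamma Hn g0).
have h3 := ler_wpM2l (ltW C0) h2.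
move: h1 h3; set K := 2 `^ (p-1); set a := d z xi `^ p; set b := d xi xi0 `^ p;
  set c := d z xi0 `^ p => h1 h3.
rewrite !mulrDr in h3 h1 *; rewrite mulrA mulr1; lra.
Qed.

Lemma h_pinfty lam xi : kap \is a fin_num -> 0 <= lam -> (lam%:E < kap)%E -> Xi xi ->
  h lam xi = +oo%E.
Proof.
move=> kfin lam0 lk Hxi.
set k := fine kap.
have kE : kap = k%:E by rewrite /k fineK.
rewrite kE lte_fin in lk.
set l1 := (lam + k) / 2.
set l2 := (lam + l1) / 2.
have l1k : l1 < k by rewrite /l1; lra.
have l21 : l2 < l1 by rewrite /l2 /l1; lra.
have ll2 : lam <= l2 by rewrite /l2 /l1; lra.
have l20 : 0 <= l2 by lra.
set del := d xi0 xi.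
have del0 : 0 <= del by exact: (@dist_ge0 _ _ _ _ Hn g0).
have [r0 r00 Hr0] : exists2 r0 : R, 0 < r0 &
    forall D, r0 <= D -> lam * (D + del) `^ p <= l2 * D `^ p.
  have [lam_eq0|lamp] := eqVneq lam 0.
    exists 1 => // D _; rewrite lam_eq0 mul0r mulr_ge0 ?powR_ge0 //.
  have lamp' : 0 < lam by rewrite lt_neqAle eq_sym lamp lam0.
  set mu := l2 / lam.
  have mu1 : 1 < mu.
    rewrite /mu ltr_pdivlMr // mul1r /l2 /l1; lra.
  set g := mu `^ p^-1.
  have gp : g `^ p = mu.
    by rewrite /g -powRrM mulVf ?gt_eqF // powRr1 // ltW // (lt_trans ltr01).
  have g1 : 1 < g.
    rewrite ltNge; apply/negP => hg.
    have := @ge0_ler_powR R p (ltW p0) g 1.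
    rewrite !nnegrE powR_ge0 ler01 => /(_ isT isT hg).
    by rewrite gp powR1 /= leNgt mu1.
  exists (del / (g - 1) + 1).
    by rewrite ltr_pwDr // divr_ge0 // subr_ge0 ltW.
  move=> D hD.
  have gD : D + del <= g * D.
    have : del / (g - 1) <= D by lra.
    rewrite ler_pdivrMr ?subr_gt0 //; lra.
  have D0 : 0 <= D.
    apply: le_trans hD; rewrite addr_ge0 // divr_ge0 // subr_ge0 ltW //.
  have g0' : 0 <= g by rewrite ltW // (lt_trans ltr01).
  have na : D + del \in Num.nneg by rewrite nnegrE addr_ge0.
  have nb : g * D \in Num.nneg by rewrite nnegrE mulr_ge0.
  have h1 := @ge0_ler_powR R p (ltW p0) (D+del) (g*D) na nb gD.
  rewrite powRM // gp in h1.
  have := ler_wpM2l lam0 h1.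
  by rewrite mulrA /mu mulrCA divff ?gt_eqF // mulr1.
apply: eq_infty => M.
set r := r0 + 1 + `|M| / (l1 - l2).
have hX : 0 <= `|M| / (l1 - l2) by rewrite divr_ge0 // subr_ge0 ltW.
have r0r : r0 <= r by rewrite /r; lra.
have r1 : 1 <= r by rewrite /r; lra.
have rM : `|M| <= (l1 - l2) * r.
  rewrite -ler_pdivrMl ?subr_gt0 // mulrC /r; lra.
have : (l1%:E < ereal_sup [set ((loss theta xi' - loss theta xi0) / (d xi' xi0) `^ p)%:E
        | xi' in Xi `&` [set xi' | (r < d xi' xi0)%R]])%E.
  rewrite ltNge; apply/negP => hle.
  have : (kap <= l1%:E)%E.
    apply: le_trans hle; apply: ereal_inf_lbound; exists r => //.
    exact: (lt_le_trans ltr01 r1).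
  by rewrite kE lee_fin leNgt l1k.
move=> /ereal_sup_gt [_ [xi' [Hxi' rD] <-]]; rewrite lte_fin => hl.
set D := d xi' xi0 in rD hl.
have D0 : 0 < D := lt_trans (lt_le_trans ltr01 r1) rD.
have Dp0 : 0 < D `^ p by apply: powR_gt0.
rewrite ltr_pdivlMr // in hl.
apply: le_trans; last first.
  apply: ereal_sup_ubound; exists xi' => //.
rewrite lee_fin.
have t1 : d xi' xi <= D + del by exact: (@dist_tri _ _ _ gamma Hn g0).
have na : d xi' xi \in Num.nneg by rewrite nnegrE (@dist_ge0 _ _ _ _ Hn g0).
have nb : D + del \in Num.nneg by rewrite nnegrE addr_ge0 // ltW.
have t2 := @ge0_ler_powR R p (ltW p0) (d xi' xi) (D + del) na nb t1.
have t3 := ler_wpM2l lam0 t2.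
have t4 := Hr0 D (le_trans r0r (ltW rD)).
have t5 : D <= D `^ p by apply: le1r_powR => //; exact: (le_trans r1 (ltW rD)).
have t6' : 0 < l1 - l2 by rewrite subr_gt0.
have t6 := ler_wpM2l (ltW t6') t5.
have t7 := ler_wpM2l (ltW t6') (ltW rD).
have t8 := loss_ge0 xi0.
have t9 : M <= `|M| by apply: ler_norm.
move: hl t3 t4 t6 t7; set A := D `^ p; set B := (D + del) `^ p; set E := d xi' xi `^ p.
move=> hl t3 t4 t6 t7.
rewrite mulrBl in t6 t7 hl.
rewrite mulrBl in t6 t7.
nra.
Qed.

Variables (n : nat) (xs : 'I_n -> Pt R m) (sigma : R) (C : 'rV[R]_dd -> R).
Hypothesis Hxs : forall i, Xi (xs i).
Local Notation Ht := (Htilde nrm gamma p Xi loss xs).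

Lemma Ht_ge0 v lam : (forall i, 0 <= v i) -> (0 <= Ht v theta lam)%E.
Proof.
move=> v0; rewrite /Htilde; apply: sume_ge0 => i _; apply: mule_ge0.
  by rewrite lee_fin.
exact: h_ge0.
Qed.

Lemma Ht_pinfty v lam : (forall i, 0 <= v i) -> \sum_(i < n) v i = 1 ->
  (forall i, h lam (xs i) = +oo%E) -> Ht v theta lam = +oo%E.
Proof.
move=> v0 sv hi.
case: (pselect (exists i, 0 < v i)) => [[i vi]|nv]; last first.
  exfalso; move: sv; rewrite big1 => [/eqP|j _]; first by rewrite eq_sym oner_eq0.
  apply/eqP; rewrite eq_le v0 andbT leNgt; apply/negP => hj; apply: nv; by exists j.
apply/eqP; rewrite -leye_eq.
have : ((v i)%:E * h lam (xs i) <= Ht v theta lam)%E.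
  rewrite /Htilde.
  have := @lee_sum_nneg_subset R 'I_n (index_enum 'I_n) xpredT (pred1 i)
    (fun j => (v j)%:E * h lam (xs j))%E.
  rewrite big_pred1_eq; apply => //.
  by move=> j _; apply: mule_ge0; [rewrite lee_fin | exact: h_ge0].
by rewrite hi muleC gt0_mulye // lte_fin.
Qed.

Lemma Ht_ub v lam (b : 'I_n -> R) (B : R) : (forall i, 0 <= v i) -> \sum_(i < n) v i = 1 ->
  (forall i, (h lam (xs i) <= (b i)%:E)%E) -> (forall i, b i <= B) ->
  (Ht v theta lam <= B%:E)%E.
Proof.
move=> v0 sv hb bB.
apply: (@le_trans _ _ (\sum_(i < n) (v i * B)%:E)%E).
  apply: lee_sum => i _; rewrite EFinM; apply: lee_wpmul2l; first by rewrite lee_fin.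
  by apply: le_trans (hb i) _; rewrite lee_fin.
by rewrite sumEFin lee_fin -mulr_suml sv mul1r.
Qed.

Hypothesis s0 : 0 < sigma.
Hypothesis C0 : 0 < C theta.
Hypothesis HC : forall z, Xi z -> loss theta z <= C theta * (1 + d z xi0 `^ p).
Hypothesis kfin : kap \is a fin_num.

Local Notation f v lam := ((lam * sigma `^ p)%:E + Ht v theta lam)%E.
Local Notation T := (tau nrm gamma p sigma xs C xi0 theta).

Lemma f_lam0 v : (forall i, 0 <= v i) -> \sum_(i < n) v i = 1 ->
  (f v (C theta * 2 `^ (p-1)) <= (T * sigma `^ p)%:E)%E.
Proof.
move=> v0 sv.
set K := 2 `^ (p-1).
set rh := rho nrm gamma xs xi0.
have K0 : 0 <= K by apply: powR_ge0.
have sp : 0 < sigma `^ p by apply: powR_gt0.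
have -> : T * sigma `^ p = C theta * K * sigma `^ p + C theta * (1 + K * rh `^ p).
  rewrite /tau -/K -/rh mulrDr mulrDl; congr (_ + _).
  by rewrite -mulrA divfK ?gt_eqF.
rewrite EFinD; apply: leeD; first by [].
apply: (@Ht_ub v _ (fun i => C theta * (1 + K * d (xs i) xi0 `^ p))) => //.
  by move=> i; apply: h_ub.
move=> i; apply: ler_wpM2l; first exact: ltW.
rewrite lerD2l; apply: ler_wpM2l => //.
have na : d (xs i) xi0 \in Num.nneg by rewrite nnegrE (@dist_ge0 _ _ _ _ Hn g0).
have hr : d (xs i) xi0 <= rh by rewrite /rh /rho; exact: le_bigmax.
have nb : rh \in Num.nneg by rewrite nnegrE (le_trans _ hr) // -nnegrE.
exact: (@ge0_ler_powR R p (ltW p0) _ _ na nb hr).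
Qed.

Lemma claim v lam : (forall i, 0 <= v i) -> \sum_(i < n) v i = 1 -> 0 <= lam ->
  exists lst, [/\ 0 <= lst, (kap <= lst%:E)%E, lst <= T & (f v lst <= f v lam)%E].
Proof.
move=> v0 sv lam0.
set l0 := C theta * 2 `^ (p-1).
have l00 : 0 <= l0 by rewrite mulr_ge0 ?powR_ge0 // ltW.
have hf := f_lam0 v v0 sv.
have kl0 : (kap <= l0%:E)%E.
  rewrite leNgt; apply/negP => hk.
  move: hf; rewrite (@Ht_pinfty v l0 v0 sv) ?addey //.
  by move=> i; apply: h_pinfty.
have l0T : l0 <= T.
  rewrite /tau mulrDr lerDl; apply: mulr_ge0; first exact: ltW.
  by rewrite divr_ge0 ?powR_ge0 // addr_ge0 // mulr_ge0 ?powR_ge0.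
have [lk|kl] := ltP lam%:E kap.
  exists l0; split => //.
  by rewrite (@Ht_pinfty v lam v0 sv) ?addey ?leey // => i; apply: h_pinfty.
have [lT|Tl] := leP lam T.
  by exists lam.
exists l0; split => //.
apply: le_trans hf _.
rewrite -[X in (X <= _)%E]adde0; apply: leeD; last exact: Ht_ge0.
rewrite lee_fin ler_wpM2r ?powR_ge0 // ltW //.
Qed.
End Main.

Unset Implicit Arguments.

Theorem corollary1 (R : realType) (m : nat) (nrm : 'rV[R]_m -> R) (gamma : R)
    (X : set 'rV[R]_m) (Y : set R) (p sigma : R) (n : nat) (xs : 'I_n -> Pt R m)
    (dd : nat) (loss : 'rV[R]_dd -> Pt R m -> R) (Theta : set 'rV[R]_dd)
    (C : 'rV[R]_dd -> R) (xi0 : Pt R m)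
    (eps alpha : R) (w : 'I_n -> R) (theta0 : 'rV[R]_dd) :
  (* setting *)
  is_norm nrm -> 0 < gamma ->
  complete_on nrm gamma (X `*` Y) ->
  1 <= p -> 0 < sigma -> (0 < n)%N ->
  (forall i, (X `*` Y) (xs i)) ->
  (* assumptions on the loss *)
  (forall theta xi, 0 <= loss theta xi) ->
  (forall theta, Theta theta -> forall xi, (X `*` Y) xi ->
     forall e : R, 0 < e -> exists2 del : R, 0 < del & forall zeta, (X `*` Y) zeta ->
       dist nrm gamma zeta xi < del -> `|loss theta zeta - loss theta xi| < e) ->
  (forall theta, 0 < C theta) -> continuous C ->
  (X `*` Y) xi0 ->
  (forall theta, Theta theta -> forall xi, (X `*` Y) xi ->
     loss theta xi <= C theta * (1 + (dist nrm gamma xi xi0) `^ p)) ->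
  (forall theta, Theta theta -> forall i,
     kappa nrm gamma p (X `*` Y) loss xi0 theta \is a fin_num /\
     (hfun nrm gamma p (X `*` Y) loss theta
        (fine (kappa nrm gamma p (X `*` Y) loss xi0 theta)) (xs i) < +oo)%E) ->
  (* standing fact: strong duality for P_n and for P~_n *)
  (forall theta, Theta theta ->
     wc_risk nrm gamma p (X `*` Y) sigma loss (empirical nrm gamma xs) theta =
     ereal_inf [set ((lam * sigma `^ p)%:E + Hfun nrm gamma p (X `*` Y) loss xs theta lam)%E
               | lam in [set lam : R | 0 <= lam]]) ->
  (forall theta, Theta theta ->
     wc_risk nrm gamma p (X `*` Y) sigma loss (wmeasure nrm gamma xs w) theta =
     ereal_inf [set ((lam * sigma `^ p)%:E + Htilde nrm gamma p (X `*` Y) loss xs w theta lam)%E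
               | lam in [set lam : R | 0 <= lam]]) ->
  (* hypotheses of the corollary *)
  0 < eps < 1 -> 1 <= alpha ->
  (forall i, 0 <= w i) -> \sum_(i < n) w i = 1 ->
  (forall theta, Theta theta -> forall lam : R,
     (kappa nrm gamma p (X `*` Y) loss xi0 theta <= lam%:E)%E ->
     lam <= tau nrm gamma p sigma xs C xi0 theta ->
     ((1 - eps)%:E * Hfun nrm gamma p (X `*` Y) loss xs theta lam
        <= Htilde nrm gamma p (X `*` Y) loss xs w theta lam)%E /\
     (Htilde nrm gamma p (X `*` Y) loss xs w theta lam
        <= (1 + eps)%:E * Hfun nrm gamma p (X `*` Y) loss xs theta lam)%E) ->
  Theta theta0 ->
  (wc_risk nrm gamma p (X `*` Y) sigma loss (wmeasure nrm gamma xs w) theta0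
     <= alpha%:E * ereal_inf (wc_risk nrm gamma p (X `*` Y) sigma loss (wmeasure nrm gamma xs w) @` Theta))%E ->
  (wc_risk nrm gamma p (X `*` Y) sigma loss (empirical nrm gamma xs) theta0
     <= (alpha * ((1 + eps) / (1 - eps)))%:E
        * ereal_inf (wc_risk nrm gamma p (X `*` Y) sigma loss (empirical nrm gamma xs) @` Theta))%E.
Proof.
move=> Hn g0 _ p1 s0 n0 Hxs lge0 _ C0 _ _ HC Hk dualP dualW /andP[e0 e1] a1 w0 sw Hcmp Hth0 Hopt.
set Xi := X `*` Y.
pose vn := fun _ : 'I_n => (n%:R^-1 : R).
have vn0 : forall i, 0 <= vn i by move=> i; rewrite /vn invr_ge0 ler0n.
have svn : \sum_(i < n) vn i = 1.
  rewrite /vn sumr_const card_ord -(mulr_natr (n%:R^-1 : R)) mulVf //.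
  by rewrite pnatr_eq0 -lt0n.
have HfE : forall th lam, Hfun nrm gamma p Xi loss xs th lam =
    Htilde nrm gamma p Xi loss xs vn th lam by [].
have i0 : 'I_n := Ordinal n0.
have kfin : forall th, Theta th -> kappa nrm gamma p Xi loss xi0 th \is a fin_num.
  by move=> th Hth; case: (Hk th Hth i0).
have HA : forall th, Theta th ->
    (wc_risk nrm gamma p Xi sigma loss (wmeasure nrm gamma xs w) th <=
     (1 + eps)%:E * wc_risk nrm gamma p Xi sigma loss (empirical nrm gamma xs) th)%E.
  move=> th Hth; rewrite dualP // dualW //.
  rewrite -lee_pdivrMl; last lra.
  apply: le_ereal_inf_tmp => _ [lam lam0 <-].
  have [lst [l0 kl lT hle]] := @claim _ _ _ gamma p Xi _ loss th xi0 Hn g0 p1 (lge0 th) _ xs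
    sigma C Hxs s0 (C0 th) (HC th Hth) (kfin th Hth) vn lam vn0 svn lam0.
  rewrite lee_pdivrMl; last lra.
  apply: le_trans; first by apply: ereal_inf_lbound; exists lst.
  have e1p : (0 <= (1 + eps)%:E)%E by rewrite lee_fin; lra.
  rewrite HfE; apply: le_trans (lee_wpmul2l e1p hle).
  rewrite ge0_muleDr ?lee_fin ?mulr_ge0 ?powR_ge0 //; last first.
    exact: (@Ht_ge0 _ _ _ gamma p Xi _ loss th Hn p1 (lge0 th) _ xs Hxs _ _ vn0).
  apply: leeD.
    by rewrite -EFinM lee_fin mulrDl mul1r lerDl mulr_ge0 ?mulr_ge0 ?powR_ge0 // ltW.
  by case: (Hcmp th Hth lst kl lT).
have HB : forall th, Theta th ->
    ((1 - eps)%:E * wc_risk nrm gamma p Xi sigma loss (empirical nrm gamma xs) th <=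
     wc_risk nrm gamma p Xi sigma loss (wmeasure nrm gamma xs w) th)%E.
  move=> th Hth; rewrite dualP // dualW //.
  apply: le_ereal_inf_tmp => _ [lam lam0 <-].
  have [lst [l0 kl lT hle]] := @claim _ _ _ gamma p Xi _ loss th xi0 Hn g0 p1 (lge0 th) _ xs
    sigma C Hxs s0 (C0 th) (HC th Hth) (kfin th Hth) w lam w0 sw lam0.
  apply: le_trans hle.
  apply: le_trans.
    apply: lee_wpmul2l; first by rewrite lee_fin; lra.
    by apply: ereal_inf_lbound; exists lst.
  rewrite HfE ge0_muleDr ?lee_fin ?mulr_ge0 ?powR_ge0 //; last first.
    exact: (@Ht_ge0 _ _ _ gamma p Xi _ loss th Hn p1 (lge0 th) _ xs Hxs _ _ vn0).
  apply: leeD.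
    by rewrite -EFinM lee_fin mulrBl mul1r lerBlDr lerDl mulr_ge0 ?mulr_ge0 ?powR_ge0 // ltW.
  by case: (Hcmp th Hth lst kl lT); rewrite -HfE.
set IW := ereal_inf _ in Hopt.
set IP := ereal_inf _.
have HI : (IW <= (1 + eps)%:E * IP)%E.
  rewrite -lee_pdivrMl; last lra.
  apply: le_ereal_inf_tmp => _ [th Hth <-].
  rewrite lee_pdivrMl; last lra.
  apply: le_trans (HA th Hth).
  by apply: ereal_inf_lbound; exists th.
have -> : alpha * ((1 + eps) / (1 - eps)) = (1 - eps)^-1 * (alpha * (1 + eps)).
  by rewrite mulrA mulrC.
rewrite EFinM -muleA lee_pdivlMl; last lra.
apply: le_trans (HB _ Hth0) _.
apply: le_trans Hopt _.
rewrite EFinM -muleA; apply: lee_wpmul2l => //.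
by rewrite lee_fin; lra.
Qed.
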